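(* Let $L$ be a perfectoid field of characteristic $0$ contained in a complete algebraically closed field $C$, and let $\mathcal D_\infty=\{|q|<1\}\subseteq\mathrm{Spa}(L\langle q^{1/p^\infty}\rangle,\mathcal O_L\langle q^{1/p^\infty}\rangle)$. If $f\in\mathcal O(\mathcal D_\infty)$ takes the constant value $a\in L$ at all $(C,\mathcal O_C)$-points of $\mathcal D_\infty$, then $f=a$ in $\mathcal O(\mathcal D_\infty)$.
   Context: $\mathcal O(\mathcal D_\infty)$ consists of series $\sum_{n\in\mathbb Z[1/p]_{\ge0}}a_nq^n$ with $a_n\in L$, $|a_n|r^n\to0$ for all $0\le r<1$, and such that for every $\delta>0$ and every bounded interval $I$ only finitely many $n\in I$ have $|a_n|>\delta$. $(C,\mathcal O_C)$-points of $\mathcal D_\infty$ correspond to compatible systems $(x^{1/p^i})_i$ of $p$-power roots of topologically nilpotent $x\in\mathcal O_C$. (In the paper $L=L_x$ is the field of definition of the Tate curve at a cusp.) *)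

(* Defs.v *)
From Stdlib Require Import Rdefinitions Rbasic_fun Rpower.
From HB Require Import structures.
From mathcomp Require Import all_boot all_order all_algebra.

Set Implicit Arguments. Unset Strict Implicit. Unset Printing Implicit Defensive.
Import GRing.Theory Num.Theory.
Local Open Scope ring_scope.

Record nonarch_abs (K : fieldType) := NonArchAbs {
  nabs :> K -> R;
  nabs_ge0 : forall x, Rle R0 (nabs x);
  nabs_eq0 : forall x, nabs x = R0 <-> x = 0;
  nabs_mul : forall x y, nabs (x * y) = Rmult (nabs x) (nabs y);
  nabs_ultra : forall x y, Rle (nabs (x + y)) (Rmax (nabs x) (nabs y))
}.

Definition cauchy_seq (K : fieldType) (v : nonarch_abs K) (u : nat -> K) : Prop :=
  forall eps, Rlt R0 eps -> exists N : nat, forall m n : nat,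
    (N <= m)%N -> (N <= n)%N -> Rlt (v (u m - u n)) eps.

Definition seq_converges (K : fieldType) (v : nonarch_abs K) (u : nat -> K) (l : K) : Prop :=
  forall eps, Rlt R0 eps -> exists N : nat, forall n : nat,
    (N <= n)%N -> Rlt (v (u n - l)) eps.

Definition complete_abs (K : fieldType) (v : nonarch_abs K) : Prop :=
  forall u, cauchy_seq v u -> exists l, seq_converges v u l.

(* Perfectoid field (Scholze): complete for a non-discrete rank one
   valuation, |p| < 1, and Frobenius surjective on O_K / p. *)
Definition perfectoid (p : nat) (K : fieldType) (v : nonarch_abs K) : Prop :=
  [/\ complete_abs v,
      (forall r, Rlt R0 r -> Rlt r R1 -> exists x, Rlt r (v x) /\ Rlt (v x) R1),
      Rlt (v (p%:R)) R1 &
      (forall x, Rle (v x) R1 ->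
         exists y, Rle (v y) R1 /\ Rle (v (y ^+ p - x)) (v (p%:R)))].

Definition int2Z (z : int) : Z :=
  match z with Posz n => Z.of_nat n | Negz n => Z.opp (Z.of_nat n.+1) end.
Definition rat2R (q : rat) : R := Rdiv (IZR (int2Z (numq q))) (IZR (int2Z (denq q))).

Definition idxZp (p : nat) (q : rat) : Prop :=
  0 <= q /\ exists k : nat, denq q = ((p ^ k)%N)%:Z.

(* O(D_infty): coefficient functions a : Q -> L supported on Z[1/p]_{>=0}
   with |a_n| r^n -> 0 (n -> oo) for all 0 < r < 1 (r = 0 is automatic), and
   only finitely many n in any bounded interval with |a_n| > delta. *)
Definition in_OD (p : nat) (L : fieldType) (v : nonarch_abs L) (a : rat -> L) : Prop :=
  [/\ (forall n, ~ idxZp p n -> a n = 0),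
      (forall r, Rlt R0 r -> Rlt r R1 -> forall eps, Rlt R0 eps ->
         exists N : rat, forall n, idxZp p n -> N < n ->
           Rlt (Rmult (v (a n)) (Rpower r (rat2R n))) eps) &
      (forall delta, Rlt R0 delta -> forall lo hi : rat,
         exists s : seq rat, forall n, idxZp p n -> lo <= n -> n <= hi ->
           Rlt delta (v (a n)) -> n \in s)].

(* (C, O_C)-points of D_infty: compatible systems of p-power roots
   (x_i)_i, x_{i+1}^p = x_i, of a topologically nilpotent x_0. *)
Definition is_point (p : nat) (C : fieldType) (w : nonarch_abs C) (xs : nat -> C) : Prop :=
  Rlt (w (xs 0%N)) R1 /\ forall i : nat, xs i.+1 ^+ p = xs i.

(* x^n for n = m / p^k (reduced) : x_k ^ m. *)
Definition ppow (p : nat) (C : fieldType) (xs : nat -> C) (n : rat) : C :=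
  xs (logn p `|denq n|%N) ^+ `|numq n|%N.

Definition has_sum (C : fieldType) (w : nonarch_abs C) (S : rat -> Prop)
    (t : rat -> C) (s : C) : Prop :=
  forall eps, Rlt R0 eps -> exists s0 : seq rat,
    (forall n, n \in s0 -> S n) /\
    forall s1 : seq rat, uniq s1 -> {subset s0 <= s1} -> (forall n, n \in s1 -> S n) ->
      Rlt (w (s - \sum_(n <- s1) t n)) eps.

Definition eval_at (p : nat) (L C : fieldType) (w : nonarch_abs C)
    (iota : {rmorphism L -> C}) (a : rat -> L) (xs : nat -> C) (s : C) : Prop :=
  has_sum w (idxZp p) (fun n => iota (a n) * ppow p xs n) s.

(* Main.v *)
Require Import Defs.
From Stdlib Require Import Reals Lra Rpower Classical.
From HB Require Import structures.
From mathcomp Require Import all_boot all_order all_algebra.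
From mathcomp Require Import Rstruct.
Set Implicit Arguments. Unset Strict Implicit.
Import Order.TTheory GRing.Theory Num.Theory.

Section RealFacts.
Local Open Scope R_scope.

Lemma Rpow_le1 t e : 0 < t -> t <= 1 -> 0 <= e -> Rpower t e <= 1.
Proof.
move=> t0 t1 e0; rewrite /Rpower.
have : ln t <= 0.
  case: (Req_dec t 1) => [->|ht]; first by rewrite ln_1; lra.
  rewrite -ln_1; left; apply: ln_increasing; lra.
move=> hl; rewrite -exp_0.
case: (Req_dec (e * ln t) 0) => [->|h]; first lra.
left; apply: exp_increasing; nra.
Qed.

Lemma Rpow_pos t e : 0 < Rpower t e.
Proof. exact: exp_pos. Qed.

Lemma ln_lt0 t : 0 < t -> t < 1 -> ln t < 0.
Proof. move=> ??; rewrite -ln_1; apply: ln_increasing; lra. Qed.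

Lemma Rpow_decr t e1 e2 : 0 < t -> t < 1 -> e1 < e2 -> Rpower t e2 < Rpower t e1.
Proof.
move=> t0 t1 he; rewrite /Rpower; apply: exp_increasing.
have := ln_lt0 t0 t1; nra.
Qed.

Lemma Rpow_close c e : 0 < c -> c < 1 -> 0 <= e ->
  exists t1, 0 < t1 /\ t1 < 1 /\ forall t, t1 < t -> t < 1 -> c < Rpower t e.
Proof.
move=> c0 c1 e0.
have lc := ln_lt0 c0 c1.
exists (exp (ln c / (e + 1))); split; first exact: exp_pos.
split.
  have : 0 < / (e + 1) by apply: Rinv_0_lt_compat; lra.
  move=> hi; have := Rmult_lt_compat_r _ _ _ hi lc; rewrite Rmult_0_l => h.
  by have := exp_increasing _ _ h; rewrite exp_0.
move=> t ht t1.
have t0 : 0 < t by have := exp_pos (ln c / (e + 1)); lra.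
have hl : ln c / (e + 1) < ln t.
  by rewrite -(ln_exp (ln c / (e+1))); apply: ln_increasing => //; apply: exp_pos.
have lt := ln_lt0 t0 t1.
have : ln c < (e + 1) * ln t.
  have -> : ln c = (e + 1) * (ln c / (e + 1)) by field; lra.
  apply: Rmult_lt_compat_l; lra.
move=> h; rewrite /Rpower -(exp_ln c c0); apply: exp_increasing; nra.
Qed.

End RealFacts.

Section A2.


Variable K : fieldType.
Variable v : nonarch_abs K.

Lemma v0 : v 0%R = R0.
Proof. by apply/nabs_eq0. Qed.

Lemma v1 : v 1%R = R1.
Proof.
have h := nabs_mul v 1%R 1%R; rewrite GRing.mulr1 in h.
have n0 : v 1%R <> R0 by move/nabs_eq0/eqP; rewrite GRing.oner_eq0.
apply: (Rmult_eq_reg_l (v 1%R)) => //; rewrite -h; ring.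
Qed.

Lemma vN x : v (- x)%R = v x.
Proof.
have hm1 : v (-1)%R = R1.
  have h := nabs_mul v (-1)%R (-1)%R; rewrite GRing.mulrNN GRing.mulr1 v1 in h.
  have := nabs_ge0 v (-1)%R; nra.
by rewrite -GRing.mulN1r nabs_mul hm1 Rmult_1_l.
Qed.

Lemma vX x n : v (x ^+ n)%R = pow (v x) n.
Proof.
elim: n => [|n IH]; first by rewrite GRing.expr0 v1.
by rewrite GRing.exprS nabs_mul IH.
Qed.

Lemma v_strict x y : Rlt (v y) (v x) -> v (x + y)%R = v x.
Proof.
move=> h.
have h1 := nabs_ultra v x y.
have h2 := nabs_ultra v (x + y)%R (- y)%R.
rewrite GRing.addrK vN in h2.
move: h1 h2; rewrite /Rmax.
case: Rle_dec => a; case: Rle_dec => b; lra.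
Qed.

Lemma v_sum_lt (I : eqType) (s : seq I) (P : pred I) (F : I -> K) T :
  Rlt R0 T -> (forall i, i \in s -> P i -> Rlt (v (F i)) T) ->
  Rlt (v (\sum_(i <- s | P i) F i)%R) T.
Proof.
move=> T0; elim: s => [|x s IH] H.
  by rewrite big_nil v0.
rewrite big_cons.
have IH' : Rlt (v (\sum_(i <- s | P i) F i)%R) T.
  by apply: IH => i hi; apply: H; rewrite in_cons hi orbT.
case px: (P x) => //.
have hx : Rlt (v (F x)) T by apply: H => //; rewrite in_cons eqxx.
have := nabs_ultra v (F x) (\sum_(i <- s | P i) F i)%R.
move: IH' hx; set S := (\sum_(i <- s | P i) F i)%R.
rewrite /Rmax; case: Rle_dec => _.
all: move=> *; lra.
Qed.


End A2.

Section A3.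
Local Open Scope ring_scope.

Lemma IZR_int2Z (z : int) : IZR (int2Z z) = (z%:~R : R).
Proof.
case: z => n /=.
  by rewrite -INR_IZR_INZ INRE.
rewrite -[Z.neg _]/(Z.opp (Z.of_nat n.+1)) opp_IZR -INR_IZR_INZ INRE NegzE.
by rewrite mulrNz RoppE.
Qed.

Lemma rat2R_ratr q : rat2R q = (ratr q : R).
Proof. by rewrite /rat2R /ratr !IZR_int2Z RdivE. Qed.

Lemma rat2R_lt q1 q2 : (q1 < q2)%R -> Rlt (rat2R q1) (rat2R q2).
Proof. by move=> h; rewrite !rat2R_ratr; apply/RltP; rewrite ltr_rat. Qed.

Lemma rat2R_ge0 q : (0 <= q)%R -> Rle R0 (rat2R q).
Proof.
move=> h; rewrite rat2R_ratr.
have h0 : (ratr 0 : R) <= ratr q by rewrite ler_rat.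
rewrite rmorph0 in h0; exact/RleP.
Qed.
End A3.

Section Point.
Variables (p : nat) (C : closedFieldType) (vC : nonarch_abs C).
Hypothesis hp : prime p.
Local Open Scope ring_scope.

Lemma root_ex (c : C) : exists x : C, x ^+ p = c.
Proof.
have p0 := prime_gt0 hp.
have [x hx] := @solve_monicpoly C p (fun i => if i == 0%N then c else 0) p0.
exists x; rewrite hx (bigD1 (Ordinal p0)) //= expr0 mulr1 big1 ?addr0 //.
move=> [i hi] /= hne; case: eqP => [h|]; last by rewrite mul0r.
by exfalso; move: hne; apply/negP; rewrite negbK; apply/eqP/val_inj; rewrite /= h.
Qed.

Lemma root_exb (c : C) : exists x : C, x ^+ p == c.
Proof. by have [x hx] := root_ex c; exists x; apply/eqP. Qed.

Definition proot (c : C) : C := xchoose (root_exb c).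

Lemma prootP c : proot c ^+ p = c.
Proof. exact/eqP/(xchooseP (root_exb c)). Qed.

Fixpoint xsq (c : C) (i : nat) : C := if i is i'.+1 then proot (xsq c i') else c.

Lemma xsq_point c : Rlt (vC c) R1 -> is_point p vC (xsq c).
Proof. by move=> h; split => // i /=; exact: prootP. Qed.

Lemma xsq_v c r : vC c = r -> Rlt R0 r ->
  forall k, vC (xsq c k) = Rpower r (Rinv (INR (p ^ k)%N)).
Proof.
move=> hc r0; elim => [|k IH] /=.
  by rewrite /= Rinv_1 Rpower_1 //.
set rho := vC (proot (xsq c k)).
have hr : pow rho p = vC (xsq c k) by rewrite /rho -vX prootP.
have pp : Rlt R0 (INR p) by apply: lt_0_INR; apply/ssrnat.ltP; exact: prime_gt0.
have rho0 : Rlt R0 rho.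
  have := nabs_ge0 vC (proot (xsq c k)); rewrite -/rho => h.
  case: (Rle_lt_or_eq_dec _ _ h) => // h0.
  have : pow rho p = R0 by rewrite -h0 pow_i //; apply/ssrnat.ltP; exact: prime_gt0.
  rewrite hr IH => h1; have := exp_pos (Rmult (Rinv (INR (p ^ k)%N)) (ln r)).
  by rewrite -/(Rpower _ _) h1 => /Rlt_irrefl.
have -> : rho = Rpower (pow rho p) (Rinv (INR p)).
  rewrite -Rpower_pow // Rpower_mult Rinv_r ?Rpower_1 //.
  by apply: Rgt_not_eq.
rewrite hr IH Rpower_mult; congr Rpower.
rewrite expnSr mult_INR Rinv_mult //.
Qed.

Lemma ppow_v c r n : vC c = r -> Rlt R0 r -> idxZp p n ->
  vC (ppow p (xsq c) n) = Rpower r (rat2R n).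
Proof.
move=> hc r0 [n0 [k hk]].
rewrite /ppow hk absz_nat pfactorK // vX (xsq_v hc r0).
have pk : Rlt R0 (INR (p ^ k)%N).
  by apply: lt_0_INR; apply/ssrnat.ltP; rewrite expn_gt0 prime_gt0.
rewrite -Rpower_pow; last exact: exp_pos.
rewrite Rpower_mult; congr Rpower.
rewrite /rat2R hk.
have hn : numq n = Posz `|numq n|%N by rewrite gez0_abs // numq_ge0.
rewrite [in RHS]hn /= -!INR_IZR_INZ /Rdiv Rmult_comm //.
Qed.

End Point.

Lemma lexmax (g : rat -> R) (s : seq rat) (x : rat) :
  exists ns, ns \in x :: s /\ forall n, n \in x :: s ->
    Rlt (g n) (g ns) \/ (g n = g ns /\ (ns <= n)%R).
Proof.
elim: s x => [|y s IH] x.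
  exists x; split; first by rewrite mem_seq1.
  by move=> n; rewrite mem_seq1 => /eqP ->; right; split.
have [ns [hns H]] := IH y.
case: (total_order_T (g x) (g ns)) => [[h|h]|h].
- exists ns; split; first by rewrite in_cons hns orbT.
  move=> n; rewrite in_cons => /orP [/eqP ->|hn]; [by left|exact: H].
- case: (boolP (x <= ns)%R) => hx.
    exists x; split; first by rewrite in_cons eqxx.
    move=> n; rewrite in_cons => /orP [/eqP ->|hn]; first by right.
    case: (H n hn) => [h1|[h1 h2]]; first by left; rewrite h.
    by right; split; [rewrite h1 h | exact: le_trans h2].
  exists ns; split; first by rewrite in_cons hns orbT.
  move=> n; rewrite in_cons => /orP [/eqP ->|hn]; last exact: H.
  by right; split => //; rewrite ltW // ltNge.
- exists x; split; first by rewrite in_cons eqxx.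
  move=> n; rewrite in_cons => /orP [/eqP ->|hn]; first by right.
  left; case: (H n hn) => [h1|[h1 _]]; [exact: Rlt_trans h1 h | by rewrite h1].
Qed.

Section ExcS.
Local Open Scope R_scope.
Lemma exc (g : rat -> R) (s : seq rat) M : Rlt R0 M ->
  exists c, Rle (/2) c /\ Rlt c R1 /\
    forall n, n \in s -> Rlt (g n) M -> Rle (g n) (Rmult c M).
Proof.
move=> M0; elim: s => [|x s [c [c1 [c2 H]]]].
  by exists (/2); split; [lra|split; [lra|]].
case: (Rlt_le_dec (g x) M) => hx.
  exists (Rmax c (g x / M)); split; first by apply: Rle_trans (Rmax_l _ _).
  split.
    apply: Rmax_lub_lt => //.
    apply: (Rmult_lt_reg_r M) => //; rewrite /Rdiv Rmult_assoc Rinv_l; lra.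
  move=> n; rewrite in_cons => /orP [/eqP ->|hn] hl.
    apply: Rle_trans (Rmult_le_compat_r _ _ _ (Rlt_le _ _ M0) (Rmax_r _ _)).
    by rewrite /Rdiv Rmult_assoc Rinv_l; lra.
  apply: Rle_trans (Rmult_le_compat_r _ _ _ (Rlt_le _ _ M0) (Rmax_l _ _)).
  exact: H.
exists c; split => //; split => // n; rewrite in_cons => /orP [/eqP ->|hn] hl.
  lra.
exact: H.
Qed.
End ExcS.

Section Chains.
Local Open Scope R_scope.
Lemma half_pos1 : 0 < /2. Proof. lra. Qed.
Lemma half_pos2 : /2 < 1. Proof. lra. Qed.
Lemma half_ex x : 0 < x -> exists e, 0 < e /\ 2 * e <= x /\ e < x.
Proof. move=> h; exists (x / 2); lra. Qed.
Lemma chain1 g Tn M c eps Ts e2 : 0 <= g -> 0 <= Tn -> Tn <= 1 -> g <= eps ->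
  2 * eps <= e2 -> e2 <= M -> /2 <= c -> c < Ts -> 0 < M -> g * Tn < M * Ts.
Proof. move=> *; nra. Qed.
Lemma chain2 g Tn M c Ts : 0 <= g -> 0 <= Tn -> Tn <= 1 -> g <= c * M ->
  c < Ts -> 0 < M -> g * Tn < M * Ts.
Proof. move=> *; nra. Qed.
Lemma chain3 M Tn Ts : Tn < Ts -> 0 < M -> M * Tn < M * Ts.
Proof. move=> *; nra. Qed.
End Chains.

Section Core.
Local Open Scope ring_scope.

Lemma core (p : nat) (L : fieldType) (vL : nonarch_abs L)
    (C : closedFieldType) (vC : nonarch_abs C) (iota : {rmorphism L -> C})
    (b : rat -> L) :
  prime p -> perfectoid p vL -> (forall x, vC (iota x) = vL x) -> in_OD p vL b ->
  (forall xs, is_point p vC xs ->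
     has_sum vC (idxZp p) (fun n => iota (b n) * ppow p xs n) 0) ->
  forall n, b n = 0.
Proof.
move=> hp [_ Hdense _ _] hiota [Hsupp Hdec Hfin] Hsum m.
apply/eqP/negPn/negP => hbm.
have idx_of : forall n, b n != 0 -> idxZp p n.
  move=> n hn; case: (classic (idxZp p n)) => // h.
  by move: hn; rewrite (Hsupp n h) eqxx.
have [x0 [hx01 hx02]] := Hdense _ half_pos1 half_pos2.
set r0 := vL x0.
have r00 : Rlt R0 r0 by have := half_pos1; rewrite /r0; lra.
set g := fun n => Rmult (vL (b n)) (Rpower r0 (rat2R n)).
have vpos : forall n, b n != 0 -> Rlt R0 (vL (b n)).
  move=> n hn; case: (Rle_lt_or_eq_dec _ _ (nabs_ge0 vL (b n))) => // h.
  by move: hn; rewrite (proj1 (nabs_eq0 vL (b n)) (esym h)) eqxx.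
have gpos : forall n, b n != 0 -> Rlt R0 (g n).
  by move=> n hn; apply: Rmult_lt_0_compat; [exact: vpos | exact: exp_pos].
have gge0 : forall n, Rle R0 (g n).
  move=> n; apply: Rmult_le_pos; [exact: nabs_ge0 | left; exact: exp_pos].
have gle : forall n, idxZp p n -> Rle (g n) (vL (b n)).
  move=> n hn; rewrite /g -[X in Rle _ X]Rmult_1_r.
  apply: Rmult_le_compat_l; first exact: nabs_ge0.
  apply: Rpow_le1 => //; first by left.
  exact: rat2R_ge0 (proj1 hn).
have [eps [e0 [e2 e3]]] := half_ex (gpos m hbm).
have [N HN] := Hdec r0 r00 hx02 eps e0.
have [s Hs] := Hfin eps e0 0 N.
have Hout : forall n, idxZp p n -> n \notin s -> Rle (g n) eps.
  move=> n hn hns; case: (boolP (N < n)) => hN; first by left; exact: HN.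
  have hnN : n <= N by rewrite leNgt.
  case: (Rlt_le_dec eps (vL (b n))) => h.
    by rewrite (Hs n hn (proj1 hn) hnN h) in hns.
  exact: Rle_trans (gle n hn) h.
have [ns [hns Hns]] := lexmax g s m.
set M := g ns.
have hMm : Rle (g m) M.
  by case: (Hns m (mem_head _ _)) => [h|[h _]]; [left|right].
have M0 : Rlt R0 M by apply: Rlt_le_trans hMm; exact: gpos.
have bns : b ns != 0.
  apply/negP => /eqP h; move: M0; rewrite /M /g h.
  rewrite (proj2 (nabs_eq0 vL 0) erefl) Rmult_0_l; exact: Rlt_irrefl.
have idxns := idx_of ns bns.
have [c [c1 [c2 Hc]]] := exc g (m :: s) M0.
have c0 : Rlt R0 c by have := half_pos1; lra.
have [t1 [t10 [t11 Ht]]] := Rpow_close c0 c2 (rat2R_ge0 (proj1 idxns)).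
have [y [hy1 hy2]] := Hdense t1 t10 t11.
set t := vL y.
have t0 : Rlt R0 t by rewrite /t; lra.
set cc := iota (x0 * y).
have vcc : vC cc = Rmult r0 t by rewrite /cc hiota nabs_mul.
have rr0 : Rlt R0 (Rmult r0 t) by apply: Rmult_lt_0_compat.
have rr1 : Rlt (vC cc) R1.
  rewrite vcc; have h := Rmult_lt_compat_r t r0 R1 t0 hx02.
  rewrite Rmult_1_l in h; exact: Rlt_trans h hy2.
set xs := xsq hp cc.
have Hpt : is_point p vC xs := xsq_point hp rr1.
have Hterm : forall n, idxZp p n ->
    vC (iota (b n) * ppow p xs n) = Rmult (g n) (Rpower t (rat2R n)).
  move=> n hn; rewrite nabs_mul hiota (ppow_v hp vcc rr0 hn).
  by rewrite -Rpower_mult_distr // /g Rmult_assoc.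
set Ts := Rpower t (rat2R ns).
have hTs : Rlt c Ts := Ht t hy1 hy2.
have Tb : forall n, idxZp p n -> Rle R0 (Rpower t (rat2R n)) /\ Rle (Rpower t (rat2R n)) R1.
  move=> n hn; split; first by left; exact: exp_pos.
  apply: Rpow_le1 => //; first by left.
  exact: rat2R_ge0 (proj1 hn).
have Hdom : forall n, idxZp p n -> n != ns ->
    Rlt (vC (iota (b n) * ppow p xs n)) (Rmult M Ts).
  move=> n hn hne; rewrite Hterm //; have [T1 T2] := Tb n hn.
  case: (boolP (n \in m :: s)) => hin.
    case: (Hns n hin) => [hl|[he hle]].
      exact: chain2 (gge0 n) T1 T2 (Hc n hin hl) hTs M0.
    rewrite he; apply: chain3 M0; apply: Rpow_decr => //.
    by apply: rat2R_lt; rewrite lt_neqAle eq_sym hne.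
  have hn' : n \notin s by move: hin; rewrite in_cons negb_or => /andP [].
  exact: chain1 (gge0 n) T1 T2 (Hout n hn hn') e2 hMm c1 hTs M0.
have T0 : Rlt R0 (Rmult M Ts) by apply: Rmult_lt_0_compat => //; exact: exp_pos.
have [s0 [Hs0 Hs1]] := Hsum xs Hpt _ T0.
set s1 := undup (ns :: s0).
have := Hs1 s1 (undup_uniq _).
have H1 : {subset s0 <= s1} by move=> z hz; rewrite mem_undup in_cons hz orbT.
have H2 : forall z, z \in s1 -> idxZp p z.
  by move=> z; rewrite mem_undup in_cons => /orP [/eqP ->|]; [exact: idxns | exact: Hs0].
move=> /(_ H1 H2).
rewrite (bigD1_seq ns) ?mem_undup ?mem_head ?undup_uniq //= sub0r vN v_strict.
  by rewrite Hterm //; exact: Rlt_irrefl.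
rewrite Hterm //; apply: v_sum_lt => // z hz hzn.
exact: Hdom (H2 z hz) hzn.
Qed.

End Core.

Lemma idx0 p : idxZp p 0.
Proof. by split => //; exists 0%N. Qed.

Local Open Scope ring_scope.

Theorem mainTheorem15 (p : nat) (L : fieldType) (vL : nonarch_abs L)
    (C : closedFieldType) (vC : nonarch_abs C) (iota : {rmorphism L -> C})
    (f : rat -> L) (a : L) :
  prime p ->
  perfectoid p vL ->
  (forall n : nat, (n.+1)%:R != 0 :> L) ->
  complete_abs vC ->
  (forall x, vC (iota x) = vL x) ->
  in_OD p vL f ->
  (forall xs, is_point p vC xs -> eval_at p vC iota f xs (iota a)) ->
  forall n : rat, f n = (if n == 0 then a else 0).
Proof.
move=> hp hperf _ _ hiota [Hsupp Hdec Hfin] Hev.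
set cor := fun n : rat => if n == 0 then a else 0.
set b := fun n => f n - cor n.
suff Hb : forall n, b n = 0.
  by move=> n; have := Hb n; rewrite /b => /eqP; rewrite subr_eq0 => /eqP.
apply: (core hp hperf hiota).
- split.
  + move=> n hn; rewrite /b /cor Hsupp //.
    case: eqP => [e|_]; last by rewrite subr0.
    by exfalso; apply: hn; rewrite e; exact: idx0.
  + move=> r r0 r1 eps e0.
    have [N HN] := Hdec r r0 r1 eps e0.
    exists (Num.max N 0) => n hn; rewrite gt_max => /andP [h1 h2].
    rewrite /b /cor (negbTE (lt0r_neq0 h2)) subr0; exact: HN.
  + move=> delta d0 lo hi.
    have [s Hs] := Hfin delta d0 lo hi.
    exists (0 :: s) => n hn h1 h2 h3; rewrite in_cons.
    case: (boolP (n == 0)) => //= hn0.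
    by apply: Hs => //; move: h3; rewrite /b /cor (negbTE hn0) subr0.
- move=> xs hpt eps e0.
  have [s0 [Hs0 Hs1]] := Hev xs hpt eps e0.
  exists (0 :: s0); split.
    by move=> n; rewrite in_cons => /orP [/eqP ->|]; [exact: idx0 | exact: Hs0].
  move=> s1 hu hsub hidx.
  have h0 : (0 : rat) \in s1 by apply: hsub; exact: mem_head.
  have := Hs1 s1 hu (fun z hz => hsub z (mem_behead (s := 0 :: s0) hz)) hidx.
  suff -> : (0 - \sum_(n <- s1) iota (b n) * ppow p xs n) =
            iota a - \sum_(n <- s1) iota (f n) * ppow p xs n by [].
  have Hc : \sum_(n <- s1) iota (cor n) * ppow p xs n = iota a.
    rewrite (bigD1_seq 0) //= big1 ?addr0.
      by rewrite /cor eqxx /ppow expr0 mulr1.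
    by move=> i hi; rewrite /cor (negbTE hi) rmorph0 mul0r.
  rewrite -{1}Hc -sumrB sub0r -sumrN; apply: eq_bigr => i _.
  by rewrite /b rmorphB mulrBl opprB.
Qed.
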